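(* Suppose $\Pi$ satisfies the Pollack condition $\alpha_n+\alpha_{n+1}=0$. Put $\alpha=\alpha_{n+1}\alpha_{n+2}\cdots\alpha_{2n}$ and $\beta=\alpha_n\alpha_{n+2}\cdots\alpha_{2n}$. Then $v_p(\alpha)=v_p(\beta)$, and $$r:=v_p(\alpha)-\sum_{i=n+1}^{2n}h_i\;\ge\;\frac{\#\mathrm{Crit}(\Pi)}{2},$$ with equality when $v_p(\alpha_{n+2}\cdots\alpha_{2n})=h_{n+2}+\cdots+h_{2n}$.
   Context: Let $p$ be an odd prime and $n\ge 1$. Fix an isomorphism $\overline{\mathbb{Q}}_p\cong\mathbb{C}$; $v_p$ denotes the $p$-adic valuation on $\mathbb{C}_p$ normalised by $v_p(p)=1$. Let $\Pi$ be a cuspidal automorphic representation of $\mathrm{GL}_{2n}(\mathbb{A}_{\mathbb{Q}})$ which is cohomological with respect to an integral weight $\mu=(\mu_1,\dots,\mu_{2n})\in\mathbb{Z}^{2n}$, which is the transfer of a globally generic cuspidal automorphic representation of $\mathrm{GSpin}_{2n+1}(\mathbb{A}_{\mathbb{Q}})$, and which is unramified at $p$. Then $\mu$ is dominant ($\mu_1\ge\cdots\ge\mu_{2n}$) and pure: there is an integer $w$ (the purity weight) with $\mu_i+\mu_{2n+1-i}=w$ for all $i$. The Hodge–Tate weights are $h_i=\mu_i+2n-i$ ($1\le i\le 2n$). Set $\mathrm{Crit}(\Pi)=\{j\in\mathbb{Z}:\mu_n\ge j\ge\mu_{n+1}\}$, so $\#\mathrm{Crit}(\Pi)=h_n-h_{n+1}$.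 Write $\Pi_p\cong\mathrm{Ind}_{B(\mathbb{Q}_p)}^{\mathrm{GL}_{2n}(\mathbb{Q}_p)}(|\cdot|^{(2n-1)/2}\lambda_p)$ (normalised parabolic induction from the upper triangular Borel $B$) for an unramified character $\lambda_p$ of the diagonal torus; the Satake parameters are $\alpha_i=\lambda_{p,i}(p)$, where $\lambda_{p,i}$ is the $i$-th diagonal component. They are indexed so that $v_p(\alpha_1)\ge\cdots\ge v_p(\alpha_{2n})$ and $\alpha_i\alpha_{2n+1-i}=\lambda$ for all $i$, for a fixed $\lambda$ with $v_p(\lambda)=2n-1+w$ (possible by the transfer from $\mathrm{GSpin}_{2n+1}$). Known fact (Hida), used freely: the Newton polygon (the piecewise linear curve through $(0,0)$ and $(j,\sum_{i=1}^{j}v_p(\alpha_{2n+1-i}))$, $j=1,\dots,2n$) lies on or above the Hodge polygon (through $(0,0)$ and $(j,\sum_{i=1}^{j}h_{2n+1-i})$, $j=1,\dots,2n$), and their endpoints coincide. *)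

(* Defs.v *)
From HB Require Import structures.
From mathcomp Require Import all_boot all_order all_algebra.
Set Implicit Arguments. Unset Strict Implicit. Unset Printing Implicit Defensive.
Import Order.TTheory GRing.Theory Num.Theory.
Local Open Scope ring_scope.

(* An abstract (rank-one, Q-valued) valuation on a field K, modelling v_p on
   C_p restricted to nonzero elements (v 0 is junk). *)
Definition is_valuation (K : fieldType) (v : K -> rat) : Prop :=
  (forall x y : K, x != 0 -> y != 0 -> v (x * y) = v x + v y) /\
  (forall x y : K, x != 0 -> y != 0 -> x + y != 0 ->
      Num.min (v x) (v y) <= v (x + y)).

(* Hodge-Tate weights h_i = mu_i + 2n - i, 1-based indexing. *)
Definition HT (n : nat) (mu : nat -> int) (i : nat) : int :=
  mu i + ((2 * n)%N%:Z - i%:Z).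

Definition newton (K : fieldType) (v : K -> rat) (n : nat) (alpha : nat -> K)
  (j : nat) : rat :=
  \sum_(1 <= i < j.+1) v (alpha ((2 * n).+1 - i)%N).

Definition hodge (n : nat) (mu : nat -> int) (j : nat) : rat :=
  \sum_(1 <= i < j.+1) (HT n mu ((2 * n).+1 - i)%N)%:~R.

Definition Crit (n : nat) (mu : nat -> int) (j : int) : bool :=
  (mu n.+1 <= j) && (j <= mu n).

(* #Crit(Pi): number of integers in [mu_{n+1}, mu_n] (mu dominant). *)
Definition crit_card (n : nat) (mu : nat -> int) : nat :=
  absz (mu n - mu n.+1 + 1).

(* Main.v *)
Require Import Defs.
From HB Require Import structures.
From mathcomp Require Import all_boot all_order all_algebra.
Import Order.TTheory GRing.Theory Num.Theory.
Local Open Scope ring_scope.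


From mathcomp Require Import lra zify.

Lemma rev_sum_aux (F : nat -> rat) (N j : nat) : (j <= N)%N ->
  \sum_(1 <= i < j.+1) F (N.+1 - i)%N = \sum_(N.+1 - j <= k < N.+1) F k.
Proof.
elim: j => [|j IH] hj.
  by rewrite big_geq // big_geq ?subn0.
rewrite big_nat_recr //= IH; last by lia.
have -> : (N.+1 - j.+1 = N - j)%N by lia.
rewrite (@big_ltn _ _ _ (N - j)); last by lia.
have -> : ((N - j).+1 = N.+1 - j)%N by lia.
by rewrite addrC.
Qed.

Lemma v_one (K : fieldType) (v : K -> rat) : is_valuation v -> v 1 = 0.
Proof.
case=> Hm _. have := Hm 1 1 (oner_neq0 _) (oner_neq0 _). rewrite mulr1 => h. lra.
Qed.

Lemma v_prod (K : fieldType) (v : K -> rat) (alpha : nat -> K) (s : seq nat) :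
  is_valuation v -> (forall i, i \in s -> alpha i != 0) ->
  \prod_(i <- s) alpha i != 0 /\ v (\prod_(i <- s) alpha i) = \sum_(i <- s) v (alpha i).
Proof.
move=> Hv; elim: s => [|x s IH] H.
  by rewrite !big_nil oner_neq0 v_one.
have [h1 h2] : \prod_(i <- s) alpha i != 0 /\ v (\prod_(i <- s) alpha i) = \sum_(i <- s) v (alpha i).
  by apply: IH => i hi; apply: H; rewrite inE hi orbT.
have hx : alpha x != 0 by apply: H; rewrite inE eqxx.
rewrite !big_cons mulf_neq0 //; split => //.
by case: Hv => Hm _; rewrite Hm // h2.
Qed.

Lemma v_neg (K : fieldType) (v : K -> rat) (x : K) : is_valuation v -> x != 0 -> v (- x) = v x.
Proof.
move=> Hv hx. have h1 : (-1 : K) != 0 by rewrite oppr_eq0 oner_neq0.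
have hm1 : v (-1) = 0.
  case: (Hv) => Hm _. have := Hm (-1) (-1) h1 h1. rewrite mulrNN mulr1 v_one //. lra.
by rewrite -mulN1r; case: Hv => Hm _; rewrite Hm // hm1 add0r.
Qed.

Theorem mainTheorem3 (p n : nat) (K : fieldType) (v : K -> rat)
  (mu : nat -> int) (w : int) (alpha : nat -> K) (lam : K) :
  prime p -> odd p -> (0 < n)%N ->
  is_valuation v -> (p%:R : K) != 0 -> v p%:R = 1 ->
  (* mu dominant and pure of weight w *)
  (forall i, (1 <= i < 2 * n)%N -> mu i.+1 <= mu i) ->
  (forall i, (1 <= i <= 2 * n)%N -> mu i + mu ((2 * n).+1 - i)%N = w) ->
  (* Satake parameters: nonzero, ordered by valuation, paired product lam *)
  (forall i, (1 <= i <= 2 * n)%N -> alpha i != 0) ->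
  (forall i j, (1 <= i)%N -> (i <= j)%N -> (j <= 2 * n)%N ->
     v (alpha j) <= v (alpha i)) ->
  (forall i, (1 <= i <= 2 * n)%N -> alpha i * alpha ((2 * n).+1 - i)%N = lam) ->
  v lam = ((2 * n)%N%:Z - 1 + w)%:~R ->
  (* Hida: Newton polygon on or above Hodge polygon, same endpoints *)
  (forall j, (j <= 2 * n)%N -> hodge n mu j <= newton v n alpha j) ->
  newton v n alpha (2 * n) = hodge n mu (2 * n) ->
  (* Pollack condition *)
  alpha n + alpha n.+1 = 0 ->
  let a := \prod_(n.+1 <= i < (2 * n).+1) alpha i in
  let b := alpha n * \prod_(n.+2 <= i < (2 * n).+1) alpha i in
  let r := v a - \sum_(n.+1 <= i < (2 * n).+1) (HT n mu i)%:~R in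
  [/\ v a = v b,
      (crit_card n mu)%:R / 2 <= r &
      v (\prod_(n.+2 <= i < (2 * n).+1) alpha i)
        = \sum_(n.+2 <= i < (2 * n).+1) (HT n mu i)%:~R ->
      r = (crit_card n mu)%:R / 2].
Proof.
move=> pp po n0 Hv hp vp Hdom Hpure Hnz Hord Hlam vlam Hhida Hend Hpol a b r.
set P := \prod_(n.+2 <= i < (2 * n).+1) alpha i.
have [hP vP] : P != 0 /\ v P = \sum_(n.+2 <= i < (2 * n).+1) v (alpha i).
  apply: v_prod => // i; rewrite mem_index_iota => hi; apply: Hnz; lia.
have hn1 : alpha n.+1 != 0 by apply: Hnz; lia.
have hn : alpha n = - alpha n.+1 by apply/eqP; rewrite -subr_eq0 opprK Hpol.
have ha : a = alpha n.+1 * P by rewrite /a big_ltn //; lia.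
have va : v a = v (alpha n.+1) + v P by rewrite ha; case: Hv => Hm _; rewrite Hm.
have vb : v b = v (alpha n.+1) + v P by rewrite /b hn; case: (Hv) => Hm _; rewrite Hm ?oppr_eq0 // v_neg.
have vl : v (alpha n.+1) + v (alpha n.+1) = v lam.
  have := Hlam n; have -> : ((2 * n).+1 - n = n.+1)%N by lia.
  move=> H; rewrite -H; last by lia.
  rewrite hn; case: (Hv) => Hm _; rewrite Hm ?oppr_eq0 // v_neg //.
have hw : mu n + mu n.+1 = w.
  have := Hpure n; have -> : ((2 * n).+1 - n = n.+1)%N by lia. by apply; lia.
have hd : mu n.+1 <= mu n by apply: Hdom; lia.
have hS : \sum_(n.+1 <= i < (2 * n).+1) (HT n mu i)%:~R =
   (HT n mu n.+1)%:~R + \sum_(n.+2 <= i < (2 * n).+1) (HT n mu i)%:~R :> rat.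
  by rewrite big_ltn //; lia.
have hH : \sum_(n.+2 <= i < (2 * n).+1) (HT n mu i)%:~R <= v P :> rat.
  have := Hhida n.-1; rewrite /hodge /newton (rev_sum_aux (fun k => v (alpha k))) ?(rev_sum_aux (fun k => (HT n mu k)%:~R)); try lia.
  have -> : ((2 * n).+1 - n.-1 = n.+2)%N by lia.
  by rewrite vP => h; apply: h; lia.
have hc : (crit_card n mu)%:R = (mu n - mu n.+1 + 1)%:~R :> rat.
  by rewrite /crit_card natr_absz ger0_norm //; lia.
have hHT : (HT n mu n.+1)%:~R = (mu n.+1)%:~R + (n%:R - 1) :> rat.
  rewrite /HT; have -> : ((2 * n)%N%:Z - n.+1%:Z) = n%:Z - 1 by lia.
  by rewrite !rmorphD /= rmorphN /= rmorph1.
have vl' : v lam = 2 * n%:R - 1 + w%:~R.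
  by rewrite vlam !rmorphD /= rmorphN /= rmorph1 -pmulrn rmorph0 addr0 mulrDl mul1r.
have hr : r = v a - \sum_(n.+1 <= i < (2 * n).+1) (HT n mu i)%:~R by [].
rewrite -hw rmorphD /= in vl'.
have hc' : (crit_card n mu)%:R = (mu n)%:~R - (mu n.+1)%:~R + 1 :> rat.
  by rewrite hc !rmorphD /= rmorphN /= rmorph1.
split.
- by rewrite va vb.
- lra.
- move=> hP'. lra.
Qed.
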